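(* Let $\Theta=\{1,2\}$ and let $A$ be a finite set with $|A|=2$. Let $P$, $Q$, $R$ be experiments. Then $R$ is a Blackwell supremum of $P$ and $Q$ if and only if $\Lambda_R=\mathrm{co}(\Lambda_P\cup\Lambda_Q)$, where the feasible sets $\Lambda_P,\Lambda_Q,\Lambda_R$ are taken with respect to the action set $A$.
   Context: $\Theta$ is a finite set of states. A decision problem is a pair $(A,u)$ with $A$ a finite nonempty action set and $u:\Theta\times A\to\mathbb{R}$. An experiment is a map $P:\Theta\to\Delta(Y)$ with $Y$ a finite signal set. For a single experiment $P:\Theta\to\Delta(Y)$ its value in $(A,u)$ is $V(P;(A,u))=\max_{\sigma:Y\to\Delta(A)}\sum_{\theta}\sum_{y}P(y|\theta)\sum_a\sigma(a|y)u(\theta,a)$. An experiment $P$ is more informative than (Blackwell dominates) $Q$ if $V(P;(A,u))\ge V(Q;(A,u))$ for every decision problem $(A,u)$. An experiment $R$ is a Blackwell supremum of experiments $P_1,\dots,P_m$ if $R$ is more informative than every $P_j$, and every experiment $S$ that is more informative than all $P_j$ is also more informative than $R$. Given an action set $A$ and an experiment $P:\Theta\to\Delta(Y)$, its feasible set is $\Lambda_P=\{\lambda:\Theta\to\Delta(A)\mid \lambda(a|\theta)=\sum_y\sigma(a|y)P(y|\theta)\text{ for some }\sigma:Y\to\Delta(A)\}$, viewed as a subset of $\mathbb{R}^{\Theta\times A}$. *)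

(* Defs.v *)
From HB Require Import structures.
From mathcomp Require Import all_boot all_order all_algebra.
From mathcomp Require Import classical_sets reals.
Set Implicit Arguments. Unset Strict Implicit. Unset Printing Implicit Defensive.
Import Order.TTheory GRing.Theory Num.Theory.
Local Open Scope ring_scope.
Local Open Scope classical_set_scope.

Notation Theta := 'I_2.

Definition stoch (R : realType) (X Z : finType) (K : X -> Z -> R) : Prop :=
  forall x, (forall z, 0 <= K x z) /\ \sum_z K x z = 1.

Definition experiment (R : realType) (Y : finType) (P : Theta -> Y -> R) : Prop :=
  stoch P.

(* Expected payoff (summed over states) of strategy sigma : Y -> Delta(A). *)
Definition payoff (R : realType) (Y A : finType) (P : Theta -> Y -> R)
    (u : Theta -> A -> R) (sigma : Y -> A -> R) : R :=
  \sum_th \sum_y P th y * \sum_a sigma y a * u th a.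

Definition value (R : realType) (Y A : finType) (P : Theta -> Y -> R)
    (u : Theta -> A -> R) : R :=
  sup [set v | exists sigma : Y -> A -> R, stoch sigma /\ v = payoff P u sigma].

Definition more_informative (R : realType) (Y1 Y2 : finType)
    (P : Theta -> Y1 -> R) (Q : Theta -> Y2 -> R) : Prop :=
  forall (A : finType) (u : Theta -> A -> R), (0 < #|A|)%N ->
    value Q u <= value P u.

Definition blackwell_sup (Rl : realType) (Y1 Y2 Y3 : finType)
    (P : Theta -> Y1 -> Rl) (Q : Theta -> Y2 -> Rl) (R : Theta -> Y3 -> Rl) : Prop :=
  more_informative R P /\ more_informative R Q /\
  forall (Y : finType) (S : Theta -> Y -> Rl), experiment S ->
    more_informative S P -> more_informative S Q -> more_informative S R.

Definition feasible (R : realType) (Y : finType) (A : finType) (P : Theta -> Y -> R)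
    : set {ffun Theta * A -> R} :=
  [set lam | exists sigma : Y -> A -> R, stoch sigma /\
      forall th a, lam (th, a) = \sum_y sigma y a * P th y].

Arguments feasible {R Y} A P.

Definition conv_hull (R : realType) (K : finType) (S : set {ffun K -> R})
    : set {ffun K -> R} :=
  [set v | exists (n : nat) (w : 'I_n -> R) (x : 'I_n -> {ffun K -> R}),
      (forall i, 0 <= w i) /\ \sum_i w i = 1 /\ (forall i, S (x i)) /\
      forall k, v k = \sum_i w i * x i k].

(* Main.v *)
Require Import Defs.
From HB Require Import structures.
From mathcomp Require Import all_boot all_order all_algebra.
From mathcomp Require Import classical_sets reals.
Import Order.TTheory GRing.Theory Num.Theory.
Local Open Scope ring_scope.
Local Open Scope classical_set_scope.
From mathcomp Require Import boolp.
From mathcomp Require Import ring lra.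
Set Implicit Arguments. Unset Strict Implicit. Unset Printing Implicit Defensive.

Module Aux.
Local Open Scope classical_set_scope.
Lemma key (R : realType) (a0 a1 b0 b1 c0 c1 p0 p1 q0 q1 : R) :
  0 <= p0 -> 0 <= p1 -> 0 <= q0 -> 0 <= q1 ->
  b0 * p0 + b1 * p1 < a0 * p0 + a1 * p1 ->
  b0 * p0 + b1 * p1 < c0 * p0 + c1 * p1 ->
  a0 * q0 + a1 * q1 < b0 * q0 + b1 * q1 ->
  c0 * q0 + c1 * q1 < b0 * q0 + b1 * q1 ->
  b0 - b1 <= a0 - a1 -> c0 - c1 <= b0 - b1 -> False.
Proof.
move=> hp0 hp1 hq0 hq1 h1 h2 h3 h4 s1 s2.
set K := p0 * q1 - q0 * p1.
have sp : 0 < p0 + p1.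
  rewrite lt_neqAle addr_ge0 // andbT; apply/negP => /eqP e.
  have e0 : p0 = 0 by lra.
  have e1 : p1 = 0 by lra.
  by move: h1; rewrite e0 e1 !mulr0 addr0 ltxx.
have E : forall x0 x1, ((x0 - b0) * p0 + (x1 - b1) * p1) * (q0 + q1)
    - ((x0 - b0) * q0 + (x1 - b1) * q1) * (p0 + p1) = ((x0 - b0) - (x1 - b1)) * K.
  by move=> x0 x1; rewrite /K; ring.
have Da : 0 < ((a0 - b0) - (a1 - b1)) * K.
  rewrite -E.
  have u1 : 0 < (a0 - b0) * p0 + (a1 - b1) * p1 by lra.
  have u2 : (a0 - b0) * q0 + (a1 - b1) * q1 < 0 by lra.
  nra.
have Dc : 0 < ((c0 - b0) - (c1 - b1)) * K.
  rewrite -E.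
  have u1 : 0 < (c0 - b0) * p0 + (c1 - b1) * p1 by lra.
  have u2 : (c0 - b0) * q0 + (c1 - b1) * q1 < 0 by lra.
  nra.
set al := (a0 - b0) - (a1 - b1) in Da; set ga := (c0 - b0) - (c1 - b1) in Dc.
have hal : 0 <= al by rewrite /al; lra.
have hga : ga <= 0 by rewrite /ga; lra.
have hK : 0 < K.
  case: (lerP K 0) => // hk; nra.
nra.
Qed.

Section Basic.
Variable R : realType.

Lemma interval_lemma (Lo Up : set R) (l0 u0 : R) :
  Lo l0 -> Up u0 -> (forall l u, Lo l -> Up u -> l <= u) ->
  exists t, (forall l, Lo l -> l <= t) /\ (forall u, Up u -> t <= u).
Proof.
move=> Ll Uu H; exists (sup Lo); split.
  apply: ub_le_sup; exists u0 => l Hl; exact: H.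
move=> u Hu; apply: ge_sup; first by exists l0.
move=> l Hl; exact: H.
Qed.

Lemma maxE0 (x : R) : Num.max 0 x = (if 0 <= x then x else 0).
Proof. by rewrite /Num.max; case: ifP => h; case: (lerP 0 x) h => //; lra. Qed.

Lemma max0_ge (x : R) : x <= Num.max 0 x.
Proof. rewrite maxE0; case: ifP => //; lra. Qed.
Lemma max0_ge0 (x : R) : 0 <= Num.max 0 x.
Proof. rewrite maxE0; case: ifP => //; lra. Qed.

Lemma max0_sub (a b x y : R) : 0 <= a -> 0 <= b ->
  Num.max 0 (a * x + b * y) <= a * Num.max 0 x + b * Num.max 0 y.
Proof.
move=> ha hb; rewrite !maxE0.
case: ifP => h1; case: ifP => h2; case: ifP => h3; nra.
Qed.

Lemma max0_scale (a x : R) : 0 <= a -> Num.max 0 (a * x) = a * Num.max 0 x.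
Proof.
move=> ha; rewrite !maxE0; case: ifP => h1; case: ifP => h2; nra.
Qed.

Definition sublin (f : R -> R -> R) := forall a b d0 d1 e0 e1, 0 <= a -> 0 <= b ->
  f (a * d0 + b * e0) (a * d1 + b * e1) <= a * f d0 d1 + b * f e0 e1.

Fixpoint zono (gs : seq (R * R)) (x0 x1 : R) : Prop :=
  match gs with
  | [::] => x0 = 0 /\ x1 = 0
  | g :: gs' => exists t, 0 <= t <= 1 /\ zono gs' (x0 - t * g.1) (x1 - t * g.2)
  end.

Definition hs (gs : seq (R * R)) (d0 d1 : R) :=
  \sum_(g <- gs) Num.max 0 (d0 * g.1 + d1 * g.2).

Lemma hs_sublin gs : sublin (hs gs).
Proof.
move=> a b d0 d1 e0 e1 ha hb; rewrite /hs !mulr_sumr -big_split /=.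
apply: ler_sum => g _.
have -> : (a * d0 + b * e0) * g.1 + (a * d1 + b * e1) * g.2 =
   a * (d0 * g.1 + d1 * g.2) + b * (e0 * g.1 + e1 * g.2) by ring.
exact: max0_sub.
Qed.

Lemma hs_cons g gs d0 d1 : hs (g :: gs) d0 d1 = Num.max 0 (d0 * g.1 + d1 * g.2) + hs gs d0 d1.
Proof. by rewrite /hs big_cons. Qed.

Lemma zono_le gs x0 x1 d0 d1 : zono gs x0 x1 -> d0 * x0 + d1 * x1 <= hs gs d0 d1.
Proof.
elim: gs x0 x1 => [|g gs IH] x0 x1 /=.
  by case=> -> ->; rewrite /hs big_nil; lra.
case=> t [/andP [t0 t1] /(IH _ _)] H; rewrite hs_cons.
have := max0_ge (d0 * g.1 + d1 * g.2); have := max0_ge0 (d0 * g.1 + d1 * g.2).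
have E : d0 * (x0 - t * g.1) + d1 * (x1 - t * g.2) = d0 * x0 + d1 * x1 - t * (d0 * g.1 + d1 * g.2) by ring.
move: H; rewrite E; set e := d0 * g.1 + d1 * g.2; set m := Num.max 0 e; nra.
Qed.

Lemma farkas gs x0 x1 :
  (forall d0 d1, d0 * x0 + d1 * x1 <= hs gs d0 d1) -> zono gs x0 x1.
Proof.
elim: gs x0 x1 => [|g gs IH] x0 x1 /= H.
  have h0 := H x0 0; have h1 := H 0 x1; rewrite /hs big_nil in h0; rewrite /hs big_nil in h1.
  have a0 : x0 <= 0 by nra. have a1 : 0 <= x0 by nra. have a2 : x1 <= 0 by nra. have a3 : 0 <= x1 by nra. split; lra.
set Lo := [set l | l = 0 \/ exists d0 d1, 0 < d0 * g.1 + d1 * g.2 /\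
   l = (d0 * x0 + d1 * x1 - hs gs d0 d1) / (d0 * g.1 + d1 * g.2)].
set Up := [set u | u = 1 \/ exists d0 d1, d0 * g.1 + d1 * g.2 < 0 /\
   u = (hs gs d0 d1 - (d0 * x0 + d1 * x1)) / (- (d0 * g.1 + d1 * g.2))].
have HL : forall d0 d1, d0 * x0 + d1 * x1 <= hs gs d0 d1 + Num.max 0 (d0 * g.1 + d1 * g.2).
  by move=> d0 d1; rewrite [hs _ _ _ + _]addrC -hs_cons; exact: H.
have [t [Ht1 Ht2]] : exists t, (forall l, Lo l -> l <= t) /\ (forall u, Up u -> t <= u).
  apply: (@interval_lemma Lo Up 0 1); [by left | by left|].
  move=> l u [->|[d0 [d1 [hd ->]]]] [->|[e0 [e1 [he ->]]]].
  - lra.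
  - have := HL e0 e1; rewrite maxE0; case: ifP => h; first lra.
    move=> hh; apply: divr_ge0; lra.
  - have := HL d0 d1; rewrite maxE0; case: ifP => h; last lra.
    move=> h'; rewrite ler_pdivrMr // mul1r; lra.
  - set a := - (e0 * g.1 + e1 * g.2); set b := d0 * g.1 + d1 * g.2.
    have ha : 0 < a by rewrite /a; lra.
    have hb : 0 < b by [].
    have := HL (a * d0 + b * e0) (a * d1 + b * e1).
    have -> : (a * d0 + b * e0) * g.1 + (a * d1 + b * e1) * g.2 = 0.
      rewrite /a /b; ring.
    rewrite maxE0 lexx addr0 => H1.
    have H2 := hs_sublin gs d0 d1 e0 e1 (ltW ha) (ltW hb).
    rewrite ler_pdivrMr // mulrAC ler_pdivlMr //.
    nra.
exists t; split.
  apply/andP; split; [apply: Ht1; by left | apply: Ht2; by left].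
apply: IH => d0 d1.
have E : d0 * (x0 - t * g.1) + d1 * (x1 - t * g.2) = d0 * x0 + d1 * x1 - t * (d0 * g.1 + d1 * g.2) by ring.
rewrite E; have := HL d0 d1; rewrite maxE0.
case: (ltrgtP 0 (d0 * g.1 + d1 * g.2)) => hd.
- have : (d0 * x0 + d1 * x1 - hs gs d0 d1) / (d0 * g.1 + d1 * g.2) <= t.
    by apply: Ht1; right; exists d0, d1.
  rewrite ler_pdivrMr // => h1 _; nra.
- have : t <= (hs gs d0 d1 - (d0 * x0 + d1 * x1)) / (- (d0 * g.1 + d1 * g.2)).
    by apply: Ht2; right; exists d0, d1.
  rewrite ler_pdivlMr; last lra.
  move=> h1 /= h2; nra.
- rewrite -hd /= addr0 mulr0 subr0 => h; lra.
Qed.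


Lemma sum_enum (Y : finType) (F : Y -> R) : \sum_(y <- enum Y) F y = \sum_y F y.
Proof. by rewrite big_enum. Qed.

Lemma zono_cat gs1 gs2 x0 x1 : zono (gs1 ++ gs2) x0 x1 ->
  exists y0 y1, zono gs1 y0 y1 /\ zono gs2 (x0 - y0) (x1 - y1).
Proof.
elim: gs1 x0 x1 => [|g gs IH] x0 x1 /=.
  by move=> H; exists 0, 0; split => //; rewrite !subr0.
case=> t [ht /IH [y0 [y1 [h1 h2]]]].
exists (y0 + t * g.1), (y1 + t * g.2); split.
  exists t; split => //; by rewrite !addrK.
have -> : x0 - (y0 + t * g.1) = x0 - t * g.1 - y0 by ring.
have -> : x1 - (y1 + t * g.2) = x1 - t * g.2 - y1 by ring.
exact: h2.
Qed.

Definition scal (a : R) (gs : seq (R * R)) := [seq (a * g.1, a * g.2) | g <- gs].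

Lemma zono_scal a gs x0 x1 : zono (scal a gs) x0 x1 ->
  exists y0 y1, zono gs y0 y1 /\ x0 = a * y0 /\ x1 = a * y1.
Proof.
elim: gs x0 x1 => [|g gs IH] x0 x1 /=.
  by case=> -> ->; exists 0, 0; rewrite !mulr0.
case=> t [ht /IH [y0 [y1 [h1 [e0 e1]]]]].
exists (y0 + t * g.1), (y1 + t * g.2); split.
  exists t; split => //; by rewrite !addrK.
split.
  have : x0 = a * y0 + t * (a * g.1) by rewrite -e0; ring.
  move=> ->; ring.
have : x1 = a * y1 + t * (a * g.2) by rewrite -e1; ring.
move=> ->; ring.
Qed.

Lemma hs_cat gs1 gs2 d0 d1 : hs (gs1 ++ gs2) d0 d1 = hs gs1 d0 d1 + hs gs2 d0 d1.
Proof. by rewrite /hs big_cat. Qed.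

Lemma hs_scal a gs d0 d1 : 0 <= a -> hs (scal a gs) d0 d1 = a * hs gs d0 d1.
Proof.
move=> ha; rewrite /hs big_map mulr_sumr; apply: eq_bigr => g _ /=.
rewrite -max0_scale //; congr Num.max; ring.
Qed.

Definition t0 : 'I_2 := ord0.
Definition t1 : 'I_2 := ord_max.

Section Exp.
Variable Y : finType.
Variable P : 'I_2 -> Y -> R.

Definition gens := [seq (P t0 y, P t1 y) | y <- enum Y].
Definition hF d0 d1 := \sum_y Num.max 0 (d0 * P t0 y + d1 * P t1 y).
Definition Zfin x0 x1 := exists s : Y -> R, (forall y, 0 <= s y <= 1) /\
  x0 = \sum_y s y * P t0 y /\ x1 = \sum_y s y * P t1 y.

Lemma hs_gens d0 d1 : hs gens d0 d1 = hF d0 d1.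
Proof. by rewrite /hs /gens big_map sum_enum. Qed.

Lemma hP_sublin : sublin hF.
Proof. move=> *; rewrite -!hs_gens; exact: hs_sublin. Qed.

Lemma Zfin_le x0 x1 d0 d1 : Zfin x0 x1 -> d0 * x0 + d1 * x1 <= hF d0 d1.
Proof.
case=> s [hs [-> ->]]; rewrite !mulr_sumr -big_split; apply: ler_sum => y _.
have [h1 h2] := andP (hs y).
have := max0_ge (d0 * P t0 y + d1 * P t1 y); have := max0_ge0 (d0 * P t0 y + d1 * P t1 y).
set m := Num.max _ _.
move=> ha hb.
have H3 : d0 * (s y * P t0 y) + d1 * (s y * P t1 y) <= m.
  have -> : d0 * (s y * P t0 y) + d1 * (s y * P t1 y) = s y * (d0 * P t0 y + d1 * P t1 y) by ring.
  nra.
exact: H3.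
Qed.

Lemma zono_Zfin_aux (l : seq Y) x0 x1 : uniq l ->
  zono [seq (P t0 y, P t1 y) | y <- l] x0 x1 ->
  exists s : Y -> R, (forall y, 0 <= s y <= 1) /\
  x0 = \sum_(y <- l) s y * P t0 y /\ x1 = \sum_(y <- l) s y * P t1 y.
Proof.
elim: l x0 x1 => [|y l IH] x0 x1 /=.
  by move=> _ [-> ->]; exists (fun _ => 0); rewrite !big_nil; split => // y; rewrite lexx ler01.
case/andP=> yl ul [t [ht /(IH _ _ ul) [s [hs [e0 e1]]]]].
exists (fun z => if z == y then t else s z); split.
  by move=> z; case: ifP.
rewrite !big_cons eqxx.
have E : forall th, \sum_(j <- l) (if j == y then t else s j) * P th j = \sum_(j <- l) s j * P th j.
  move=> th; apply: eq_big_seq => z zl; case: eqP => // ez; by move: yl; rewrite -ez zl.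
rewrite !E -e0 -e1 /=; split; ring.
Qed.

Lemma zono_Zfin x0 x1 : zono gens x0 x1 -> Zfin x0 x1.
Proof.
move=> /(zono_Zfin_aux (enum_uniq Y)) [s [hs [e0 e1]]]; exists s.
by rewrite -!sum_enum.
Qed.

Lemma Zfin_zono x0 x1 : Zfin x0 x1 -> zono gens x0 x1.
Proof. move=> H; apply: farkas => d0 d1; rewrite hs_gens; exact: Zfin_le. Qed.

Lemma Zfin_farkas x0 x1 : (forall d0 d1, d0 * x0 + d1 * x1 <= hF d0 d1) -> Zfin x0 x1.
Proof. move=> H; apply: zono_Zfin; apply: farkas => d0 d1; rewrite hs_gens; exact: H. Qed.

Lemma hP_attained d0 d1 : exists x0 x1, Zfin x0 x1 /\ hF d0 d1 = d0 * x0 + d1 * x1.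
Proof.
pose s y : R := if 0 <= d0 * P t0 y + d1 * P t1 y then 1 else 0.
exists (\sum_y s y * P t0 y), (\sum_y s y * P t1 y); split.
  exists s; split => // y; rewrite /s; case: ifP => _; by rewrite ?lexx ?ler01.
rewrite !mulr_sumr -big_split; apply: eq_bigr => y _.
rewrite maxE0 /s; case: ifP => _; rewrite /= ?mul1r ?mul0r ?mulr0 ?addr0 //.
Qed.

End Exp.


Lemma mix_lemma (f g : R -> R -> R) z0 z1 : sublin f -> sublin g ->
  (forall d0 d1, d0 * z0 + d1 * z1 <= Num.max (f d0 d1) (g d0 d1)) ->
  exists t, 0 <= t <= 1 /\
    forall d0 d1, d0 * z0 + d1 * z1 <= t * f d0 d1 + (1 - t) * g d0 d1.
Proof.
move=> sf sg H.
have Hf : forall d0 d1, f d0 d1 >= g d0 d1 -> d0 * z0 + d1 * z1 <= f d0 d1.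
  by move=> d0 d1 h; move: (H d0 d1); rewrite /Num.max; case: ifP => _ //; lra.
have Hg : forall d0 d1, f d0 d1 <= g d0 d1 -> d0 * z0 + d1 * z1 <= g d0 d1.
  by move=> d0 d1 h; move: (H d0 d1); rewrite /Num.max; case: ifP => _ //; lra.
set Lo := [set l | l = 0 \/ exists d0 d1, g d0 d1 < f d0 d1 /\
   l = (d0 * z0 + d1 * z1 - g d0 d1) / (f d0 d1 - g d0 d1)].
set Up := [set u | u = 1 \/ exists d0 d1, f d0 d1 < g d0 d1 /\
   u = (g d0 d1 - (d0 * z0 + d1 * z1)) / (g d0 d1 - f d0 d1)].
have [t [Ht1 Ht2]] : exists t, (forall l, Lo l -> l <= t) /\ (forall u, Up u -> t <= u).
  apply: (@interval_lemma Lo Up 0 1); [by left | by left|].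
  move=> l u [->|[d0 [d1 [hd ->]]]] [->|[e0 [e1 [he ->]]]].
  - lra.
  - have := Hg e0 e1 (ltW he) => h'; apply: divr_ge0; lra.
  - have := Hf d0 d1 (ltW hd) => h'; rewrite ler_pdivrMr ?mul1r; lra.
  - set D1 := f d0 d1 - g d0 d1; set D2 := g e0 e1 - f e0 e1.
    have h1 : 0 < D1 by rewrite /D1; lra.
    have h2 : 0 < D2 by rewrite /D2; lra.
    have H1 := H (D2 * d0 + D1 * e0) (D2 * d1 + D1 * e1).
    have F1 := sf D2 D1 d0 d1 e0 e1 (ltW h2) (ltW h1).
    have G1 := sg D2 D1 d0 d1 e0 e1 (ltW h2) (ltW h1).
    have K : Num.max (f (D2 * d0 + D1 * e0) (D2 * d1 + D1 * e1))
                     (g (D2 * d0 + D1 * e0) (D2 * d1 + D1 * e1)) <=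
             D2 * g d0 d1 + D1 * g e0 e1.
      rewrite ge_max; apply/andP; split; last by [].
      apply: (le_trans F1).
      have -> : D2 * f d0 d1 + D1 * f e0 e1 = D2 * g d0 d1 + D1 * g e0 e1 by rewrite /D1 /D2; ring.
      by [].
    have K2 := le_trans H1 K.
    rewrite ler_pdivrMr // mulrAC ler_pdivlMr //.
    nra.
exists t; split.
  apply/andP; split; [apply: Ht1; by left | apply: Ht2; by left].
move=> d0 d1.
case: (ltrgtP (g d0 d1) (f d0 d1)) => hd.
- have : (d0 * z0 + d1 * z1 - g d0 d1) / (f d0 d1 - g d0 d1) <= t.
    by apply: Ht1; right; exists d0, d1.
  rewrite ler_pdivrMr; last lra.
  move=> h1; nra.
- have : t <= (g d0 d1 - (d0 * z0 + d1 * z1)) / (g d0 d1 - f d0 d1).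
    by apply: Ht2; right; exists d0, d1.
  rewrite ler_pdivlMr; last lra.
  move=> h1; nra.
- have := Hg d0 d1; rewrite hd lexx => /(_ isT) h.
  have -> : t * f d0 d1 + (1 - t) * f d0 d1 = f d0 d1 by ring.
  exact h.
Qed.

Lemma co_farkas (Y1 Y2 : finType) (P : 'I_2 -> Y1 -> R) (Q : 'I_2 -> Y2 -> R) z0 z1 :
  (forall d0 d1, d0 * z0 + d1 * z1 <= Num.max (hF P d0 d1) (hF Q d0 d1)) ->
  exists t x0 x1 w0 w1, 0 <= t <= 1 /\ Zfin P x0 x1 /\ Zfin Q w0 w1 /\
    z0 = t * x0 + (1 - t) * w0 /\ z1 = t * x1 + (1 - t) * w1.
Proof.
move=> H.
have [t [/andP [ht0 ht1] Ht]] := mix_lemma (hP_sublin P) (hP_sublin Q) H.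
have : zono (scal t (gens P) ++ scal (1 - t) (gens Q)) z0 z1.
  apply: farkas => d0 d1; rewrite hs_cat !hs_scal ?subr_ge0 // !hs_gens; exact: Ht.
case/zono_cat=> y0 [y1 [/zono_scal [x0 [x1 [hx [e0 e1]]]] /zono_scal [w0 [w1 [hw [f0 f1]]]]]].
exists t, x0, x1, w0, w1; split; first by rewrite ht0 ht1.
split; first exact: zono_Zfin.
split; first exact: zono_Zfin.
split.
  lra.
lra.
Qed.

Section Max.
Variable A' : finType.

Definition mxS (B : {set A'}) (f : A' -> R) : R :=
  match [pick x in B] with
  | Some x0 => \big[Num.max/f x0]_(x <- enum B) f x
  | None => 0
  end.

Lemma bigmax_ub (s : seq A') (f : A' -> R) x0 x : x \in s ->
  f x <= \big[Num.max/f x0]_(y <- s) f y.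
Proof.
elim: s => [|y s IH] //; rewrite inE big_cons => /orP [/eqP ->|/IH h].
  by rewrite le_max lexx.
by rewrite le_max h orbT.
Qed.

Lemma bigmax_att (s : seq A') (f : A' -> R) x0 :
  exists2 x, x \in x0 :: s & \big[Num.max/f x0]_(y <- s) f y = f x.
Proof.
elim: s => [|y s [x hx IH]]; first by exists x0; rewrite ?inE ?eqxx // big_nil.
rewrite big_cons IH /Num.max; case: ifP => _.
  exists x => //; move: hx; rewrite !in_cons => /orP [->|->] //; by rewrite !orbT.
by exists y => //; rewrite !in_cons eqxx orbT.
Qed.

Lemma mxS_ub (B : {set A'}) (f : A' -> R) x : x \in B -> f x <= mxS B f.
Proof.
move=> xB; rewrite /mxS; case: pickP => [x0 x0B|]; last by move/(_ x); rewrite xB.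
by apply: bigmax_ub; rewrite mem_enum.
Qed.

Lemma mxS_att (B : {set A'}) (f : A' -> R) : B != finset.set0 -> exists2 x, x \in B & mxS B f = f x.
Proof.
move=> /set0Pn [x1 x1B]; rewrite /mxS; case: pickP => [x0 x0B|]; last by move/(_ x1); rewrite x1B.
have [x hx ->] := bigmax_att (enum B) f x0.
by exists x => //; move: hx; rewrite inE mem_enum => /orP [/eqP ->|].
Qed.

Lemma mxS_eq (B : {set A'}) (f : A' -> R) m : (forall x, x \in B -> f x <= m) -> (exists2 x, x \in B & f x = m) ->
  mxS B f = m.
Proof.
move=> H [x xB fx]; have [y yB e] : exists2 y, y \in B & mxS B f = f y.
  by apply: mxS_att; apply/set0Pn; exists x.
apply/eqP; rewrite eq_le; apply/andP; split; first by rewrite e H.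
by rewrite -fx mxS_ub.
Qed.

End Max.

Lemma sumI2 (F : 'I_2 -> R) : \sum_th F th = F t0 + F t1.
Proof.
rewrite big_ord_recl big_ord1; congr (_ + _); congr F; exact: val_inj.
Qed.

Definition Lf (A' : finType) (u : 'I_2 -> A' -> R) x p0 p1 := u t0 x * p0 + u t1 x * p1.
Definition Mv (A' : finType) (u : 'I_2 -> A' -> R) B p0 p1 := mxS B (fun x => Lf u x p0 p1).

Section Value.
Variables (Y A' : finType) (P : 'I_2 -> Y -> R) (u : 'I_2 -> A' -> R).

Lemma payoff_eq (sg : Y -> A' -> R) :
  payoff P u sg = \sum_y \sum_a sg y a * Lf u a (P t0 y) (P t1 y).
Proof.
rewrite /payoff sumI2 -big_split; apply: eq_bigr => y _.
rewrite !mulr_sumr -big_split; apply: eq_bigr => a _ /=; rewrite /Lf; ring.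
Qed.

Lemma value_eq : (0 < #|A'|)%N -> value P u = \sum_y Mv u (setTfor A') (P t0 y) (P t1 y).
Proof.
move=> hA; have nT : (setTfor A') != finset.set0.
  by apply/set0Pn; case/card_gt0P: hA => x _; exists x; rewrite inE.
set M := \sum_y _.
have ub : forall sg, stoch sg -> payoff P u sg <= M.
  move=> sg hsg; rewrite payoff_eq; apply: ler_sum => y _.
  have [h0 h1] := hsg y.
  apply: (@le_trans _ _ (\sum_a sg y a * Mv u (setTfor A') (P t0 y) (P t1 y))).
    apply: ler_sum => a _; apply: ler_wpM2l => //; apply: mxS_ub; by rewrite inE.
  by rewrite -mulr_suml h1 mul1r.
pose sg y a : R := if [pick x | Lf u x (P t0 y) (P t1 y) == Mv u (setTfor A') (P t0 y) (P t1 y)] is Some x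
   then (x == a)%:R else 0.
have hsg : stoch sg.
  move=> y; rewrite /sg; case: pickP => [x _|].
    split; first by move=> a; rewrite ler0n.
    rewrite (bigD1 x) //= eqxx big1 ?addr0 // => a /negbTE; by rewrite eq_sym => ->.
  have [x _ e] := mxS_att (fun x => Lf u x (P t0 y) (P t1 y)) nT.
  by move/(_ x); rewrite /Mv e eqxx.
have att : payoff P u sg = M.
  rewrite payoff_eq; apply: eq_bigr => y _; rewrite /sg; case: pickP => [x /eqP hx|].
    rewrite (bigD1 x) //= eqxx mul1r hx big1 ?addr0 // => a /negbTE; by rewrite eq_sym => ->; rewrite mul0r.
  have [x _ e] := mxS_att (fun x => Lf u x (P t0 y) (P t1 y)) nT.
  by move/(_ x); rewrite /Mv e eqxx.
apply/eqP; rewrite eq_le; apply/andP; split.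
  apply: ge_sup; first by exists M, sg.
  by move=> v [sg' [h ->]]; exact: ub.
by apply: ub_le_sup; [exists M => v [sg' [h ->]]; exact: ub | exists sg].
Qed.

End Value.

Lemma sumL (Y A' : finType) (P : 'I_2 -> Y -> R) (u : 'I_2 -> A' -> R) a :
  stoch P -> \sum_y Lf u a (P t0 y) (P t1 y) = u t0 a + u t1 a.
Proof.
move=> hF; rewrite /Lf big_split /= -!mulr_sumr.
by have [_ ->] := hF t0; have [_ ->] := hF t1; rewrite !mulr1.
Qed.

Lemma sum_decomp (X A' : finType) (T : 'I_2 -> X -> R) (u : 'I_2 -> A' -> R) B B' d0 d1 :
  stoch T ->
  (forall p0 p1, 0 <= p0 -> 0 <= p1 -> Mv u B p0 p1 = Mv u B' p0 p1 + Num.max 0 (d0 * p0 + d1 * p1)) ->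
  \sum_x Mv u B (T t0 x) (T t1 x) = \sum_x Mv u B' (T t0 x) (T t1 x) + hF T d0 d1.
Proof.
move=> hT H; rewrite /hF -big_split; apply: eq_bigr => x _ /=.
by apply: H; [case: (hT t0) | case: (hT t1)].
Qed.

Section Hard.
Variables (Y Z A' : finType) (P : 'I_2 -> Y -> R) (S : 'I_2 -> Z -> R).
Hypotheses (hPe : stoch P) (hSe : stoch S)
  (hle : forall d0 d1, hF P d0 d1 <= hF S d0 d1).
Variable u : 'I_2 -> A' -> R.

Let slope x := u t0 x - u t1 x.

Lemma hard_aux n : forall B : {set A'}, (#|B| <= n)%N -> B != finset.set0 ->
  \sum_y Mv u B (P t0 y) (P t1 y) <= \sum_z Mv u B (S t0 z) (S t1 z).
Proof.
elim: n => [|n IH] B hn hB.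
  by move: hB; rewrite -card_gt0; move: hn; rewrite leqn0 => /eqP ->.
have step : forall (B' : {set A'}) (d0 d1 : R), B' \subset B -> (#|B'| < #|B|)%N -> B' != finset.set0 ->
   (forall p0 p1, 0 <= p0 -> 0 <= p1 -> Mv u B p0 p1 = Mv u B' p0 p1 + Num.max 0 (d0 * p0 + d1 * p1)) ->
   \sum_y Mv u B (P t0 y) (P t1 y) <= \sum_z Mv u B (S t0 z) (S t1 z).
  move=> B' d0 d1 sB lB nB' H.
  rewrite (sum_decomp hPe H) (sum_decomp hSe H); apply: lerD; last exact: hle.
  apply: IH => //; rewrite -ltnS; exact: leq_trans lB hn.
case: (leqP #|B| 1) => hc.
  have [a aB] := set0Pn _ hB.
  have Ba : B = finset.set1 a.
    apply/eqP; rewrite eq_sym eqEcard finset.sub1set aB finset.cards1 /=; exact: hc.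
  have E : forall (X : finType) (T : 'I_2 -> X -> R), stoch T ->
      \sum_x Mv u B (T t0 x) (T t1 x) = u t0 a + u t1 a.
    move=> X T hT; rewrite -(sumL u a hT); apply: eq_bigr => x _.
    apply: mxS_eq; first by move=> y; rewrite Ba inE => /eqP ->.
    by exists a.
  by rewrite (E _ _ hPe) (E _ _ hSe).
case: (pselect (exists2 b, b \in B & forall p0 p1, 0 <= p0 -> 0 <= p1 ->
                 Lf u b p0 p1 <= Mv u (B :\ b) p0 p1)) => [[b bB hdom]|hnd].
  have nB' : B :\ b != finset.set0.
    by rewrite -card_gt0; move: hc; rewrite (cardsD1 b B) bB add1n ltnS.
  apply: (@step (B :\ b) 0 0); rewrite ?subsetDl //.
    by rewrite (cardsD1 b B) bB add1n ltnS.
  move=> p0 p1 h0 h1; rewrite !mul0r addr0 maxxx addr0.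
  apply: mxS_eq.
    move=> x xB; case: (eqVneq x b) => [->|xb]; first exact: hdom.
    by apply: mxS_ub; rewrite !inE xb.
  have [x hx e] := mxS_att (fun x => Lf u x p0 p1) nB'.
  exists x; [by move: hx; rewrite inE => /andP [] | by rewrite -e].
have [a aB ea] := mxS_att slope hB.
have nBa : B :\ a != finset.set0.
  by rewrite -card_gt0; move: hc; rewrite (cardsD1 a B) aB add1n ltnS.
have [b bBa eb] := mxS_att slope nBa.
have [ba bB] : b != a /\ b \in B by move: bBa; rewrite !inE => /andP [].
apply: (@step (B :\ a) (u t0 a - u t0 b) (u t1 a - u t1 b)); rewrite ?subsetDl //.
  by rewrite (cardsD1 a B) aB add1n ltnS.
move=> p0 p1 h0 h1.
have LE : Lf u a p0 p1 - Lf u b p0 p1 = (u t0 a - u t0 b) * p0 + (u t1 a - u t1 b) * p1.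
  rewrite /Lf; ring.
rewrite -LE.
case: (lerP (Lf u a p0 p1) (Lf u b p0 p1)) => hab.
  have -> : Num.max 0 (Lf u a p0 p1 - Lf u b p0 p1) = 0.
    rewrite maxE0; case: ifP => // h; lra.
  rewrite addr0.
  apply: mxS_eq.
    move=> x xB; case: (eqVneq x a) => [->|xa].
      apply: (le_trans hab); exact: mxS_ub.
    by apply: mxS_ub; rewrite !inE xa.
  have [x hx e] := mxS_att (fun x => Lf u x p0 p1) nBa.
  exists x; [by move: hx; rewrite inE => /andP [] | by rewrite -e].
have C : forall c, c \in B :\ a -> Lf u c p0 p1 <= Lf u b p0 p1.
  move=> c; rewrite !inE => /andP [ca cB].
  case: (lerP (Lf u c p0 p1) (Lf u b p0 p1)) => // hcb.
  exfalso; apply: hnd; exists b => // q0 q1 hq0 hq1.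
  case: (lerP (Lf u b q0 q1) (Mv u (B :\ b) q0 q1)) => // hq.
  have cb : c != b by apply/eqP => e; move: hcb; rewrite e ltxx.
  have h3 : Lf u a q0 q1 < Lf u b q0 q1.
    apply: le_lt_trans hq; apply: mxS_ub; by rewrite !inE eq_sym ba.
  have h4 : Lf u c q0 q1 < Lf u b q0 q1.
    apply: le_lt_trans hq; apply: mxS_ub; by rewrite !inE cb.
  have s1 : slope b <= slope a by rewrite -ea; apply: mxS_ub.
  have s2 : slope c <= slope b by rewrite -eb; apply: mxS_ub; rewrite !inE ca.
  move: hab hcb h3 h4 s1 s2; rewrite /Lf /slope => hab hcb h3 h4 s1 s2.
  exfalso; exact: (key h0 h1 hq0 hq1 hab hcb h3 h4 s1 s2).
have E1 : Mv u (B :\ a) p0 p1 = Lf u b p0 p1.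
  by apply: mxS_eq => //; exists b.
rewrite E1 maxE0 ifT; last by lra.
apply: mxS_eq; last by exists a => //; ring.
move=> x xB; case: (eqVneq x a) => [->|xa]; first by lra.
have := C x; rewrite !inE xa xB => /(_ isT); lra.
Qed.

End Hard.

Lemma hard (Y Z : finType) (P : 'I_2 -> Y -> R) (S : 'I_2 -> Z -> R) :
  stoch P -> stoch S -> (forall d0 d1, hF P d0 d1 <= hF S d0 d1) ->
  more_informative S P.
Proof.
move=> hPe hSe hle A' u hA; rewrite !value_eq //.
apply: (hard_aux hPe hSe hle u (leqnn _)).
by apply/set0Pn; case/card_gt0P: hA => x _; exists x; rewrite inE.
Qed.

Lemma dom3 (c0 c1 m h g0 g1 v x0 x1 d0 d1 : R) :
  0 < c0 -> c1 < 0 -> 0 <= h -> 0 <= g0 -> 0 <= g1 -> 0 <= v ->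
  h + g0 = 1 -> g1 + v = 1 -> c0 * g0 + c1 * g1 = 0 -> c0 * h = m ->
  0 <= x0 <= 1 -> 0 <= x1 <= 1 -> c0 * x0 + c1 * x1 <= m ->
  c0 + c1 - m <= c0 * x0 + c1 * x1 ->
  d0 * x0 + d1 * x1 <=
    Num.max 0 (d0 * h) + Num.max 0 (d0 * g0 + d1 * g1) + Num.max 0 (d1 * v).
Proof.
move=> hc0 hc1 hh hg0 hg1 hv e1 e2 e3 e4 /andP [hx0 hx0'] /andP [hx1 hx1'] l1 l2.
have M1 : forall z : R, z <= Num.max 0 z by move=> z; rewrite maxE0; case: ifP => //; lra.
have M0 : forall z : R, 0 <= Num.max 0 z by move=> z; rewrite maxE0; case: ifP => //; lra.
have A1 := M1 (d0 * h); have A2 := M1 (d0 * g0 + d1 * g1); have A3 := M1 (d1 * v).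
have B1 := M0 (d0 * h); have B2 := M0 (d0 * g0 + d1 * g1); have B3 := M0 (d1 * v).
move: A1 A2 A3 B1 B2 B3.
set m1 := Num.max 0 (d0 * h); set m2 := Num.max 0 _; set m3 := Num.max 0 (d1 * v).
move=> A1 A2 A3 B1 B2 B3.
have E1 : c0 * h + c0 * g0 = c0 by rewrite -mulrDr e1 mulr1.
have E2 : c1 * g1 + c1 * v = c1 by rewrite -mulrDr e2 mulr1.
case: (lerP 0 d0) => hd0; case: (lerP 0 d1) => hd1.
-
  have : d0 * x0 + d1 * x1 <= d0 * h + (d0 * g0 + d1 * g1) + d1 * v.
    have -> : d0 * h + (d0 * g0 + d1 * g1) + d1 * v = d0 * (h + g0) + d1 * (g1 + v) by ring.
    rewrite e1 e2 !mulr1; nra.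
  lra.
-
  case: (lerP (d0 * c1) (c0 * d1)) => hr.
  + (* vertex (1, g1) *)
    have I : c1 * (d0 * (x0 - 1) + d1 * (x1 - g1)) =
       d1 * (c0 * (x0 - 1) + c1 * (x1 - g1)) + (d0 * c1 - d1 * c0) * (x0 - 1) by ring.
    have cv : c0 * 1 + c1 * g1 = m by lra.
    have J1 : 0 <= d1 * (c0 * (x0 - 1) + c1 * (x1 - g1)) by nra.
    have J2 : 0 <= (d0 * c1 - d1 * c0) * (x0 - 1) by nra.
    have K : d0 * (x0 - 1) + d1 * (x1 - g1) <= 0 by nra.
    have : d0 * x0 + d1 * x1 <= d0 * h + (d0 * g0 + d1 * g1).
      have -> : d0 * h + (d0 * g0 + d1 * g1) = d0 * (h + g0) + d1 * g1 by ring.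
      rewrite e1 mulr1; lra.
    lra.
  + (* vertex (h, 0) *)
    have I : c0 * (d0 * (x0 - h) + d1 * x1) =
       d0 * (c0 * (x0 - h) + c1 * x1) + (d1 * c0 - d0 * c1) * x1 by ring.
    have J1 : d0 * (c0 * (x0 - h) + c1 * x1) <= 0 by nra.
    have J2 : (d1 * c0 - d0 * c1) * x1 <= 0 by nra.
    have K : d0 * (x0 - h) + d1 * x1 <= 0 by nra.
    lra.
-
  case: (lerP (d0 * c1) (d1 * c0)) => hr.
  + (* vertex (g0, 1) *)
    have I : c0 * (d0 * (x0 - g0) + d1 * (x1 - 1)) =
       d0 * (c0 * (x0 - g0) + c1 * (x1 - 1)) + (d1 * c0 - d0 * c1) * (x1 - 1) by ring.
    have cv : c0 * g0 + c1 * 1 = c0 + c1 - m by lra.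
    have J1 : d0 * (c0 * (x0 - g0) + c1 * (x1 - 1)) <= 0 by nra.
    have J2 : (d1 * c0 - d0 * c1) * (x1 - 1) <= 0 by nra.
    have K : d0 * (x0 - g0) + d1 * (x1 - 1) <= 0 by nra.
    have : d0 * x0 + d1 * x1 <= (d0 * g0 + d1 * g1) + d1 * v.
      have -> : (d0 * g0 + d1 * g1) + d1 * v = d0 * g0 + d1 * (g1 + v) by ring.
      rewrite e2 mulr1; lra.
    lra.
  + (* vertex (0, v) *)
    have I : c1 * (d0 * x0 + d1 * (x1 - v)) =
       d1 * (c0 * x0 + c1 * (x1 - v)) + (d0 * c1 - d1 * c0) * x0 by ring.
    have cv : c1 * v = c0 + c1 - m by lra.
    have J1 : 0 <= d1 * (c0 * x0 + c1 * (x1 - v)) by nra.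
    have J2 : 0 <= (d0 * c1 - d1 * c0) * x0 by nra.
    have K : d0 * x0 + d1 * (x1 - v) <= 0 by nra.
    lra.
-
  nra.
Qed.

Lemma easy (Y Z A' : finType) (P : 'I_2 -> Y -> R) (S : 'I_2 -> Z -> R) (a b : A') :
  a != b -> more_informative S P -> forall d0 d1, hF P d0 d1 <= hF S d0 d1.
Proof.
move=> ab H d0 d1.
pose u (th : 'I_2) (x : A') : R := if x == a then (if th == t0 then d0 else d1) else 0.
have E : forall (X : finType) (T : 'I_2 -> X -> R), value T u = hF T d0 d1.
  move=> X T; rewrite value_eq; last by apply/card_gt0P; exists a.
  apply: eq_bigr => y _; apply: mxS_eq.
    move=> x _; rewrite /Lf /u; case: eqP => _ /=.
      exact: max0_ge.
    by rewrite !mul0r addr0; exact: max0_ge0.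
  rewrite maxE0; case: ifP => h.
    by exists a; rewrite ?inE // /Lf /u eqxx.
  by exists b; rewrite ?inE // /Lf /u eq_sym (negbTE ab) !mul0r addr0.
rewrite -!E; apply: H; by apply/card_gt0P; exists a.
Qed.

Definition S3 (h g0 g1 v : R) : 'I_2 -> 'I_3 -> R := fun th y =>
  if th == t0 then (if val y == 0%N then h else if val y == 1%N then g0 else 0)
  else (if val y == 0%N then 0 else if val y == 1%N then g1 else v).

Lemma sumI3 (F : 'I_3 -> R) :
  \sum_y F y = F (@Ordinal 3 0 isT) + F (@Ordinal 3 1 isT) + F (@Ordinal 3 2 isT).
Proof.
rewrite !big_ord_recl big_ord0 addr0 addrA; congr (_ + _ + _); congr F; exact: val_inj.
Qed.

Lemma t10 : (t1 == t0) = false. Proof. by []. Qed.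

Lemma hS3 h g0 g1 v d0 d1 : hF (S3 h g0 g1 v) d0 d1 =
  Num.max 0 (d0 * h) + Num.max 0 (d0 * g0 + d1 * g1) + Num.max 0 (d1 * v).
Proof. by rewrite /hF sumI3 /S3 /= !mulr0 addr0 add0r. Qed.

Lemma S3_stoch h g0 g1 v : 0 <= h -> 0 <= g0 -> 0 <= g1 -> 0 <= v ->
  h + g0 = 1 -> g1 + v = 1 -> stoch (S3 h g0 g1 v).
Proof.
move=> *; move=> th; split.
  move=> y; rewrite /S3; case: ifP => _; case: ifP => _ //; case: ifP => _ //.
rewrite sumI3 /S3; case: ifP => _ /=; rewrite ?add0r ?addr0 //.
Qed.

Lemma Zfin_box (Y : finType) (T : 'I_2 -> Y -> R) x0 x1 : stoch T -> Zfin T x0 x1 ->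
  (0 <= x0 <= 1) /\ (0 <= x1 <= 1).
Proof.
move=> hT [s [hs [-> ->]]].
have B : forall th, 0 <= \sum_y s y * T th y <= 1.
  move=> th; have [h0 h1] := hT th; apply/andP; split.
    apply: sumr_ge0 => y _; have := hs y; have := h0 y; move=> a /andP [b c]; exact: mulr_ge0.
  rewrite -h1; apply: ler_sum => y _; have := hs y; have := h0 y; move=> a /andP [b c].
  by rewrite ler_piMl.
by split; apply: B.
Qed.

Lemma Zfin_compl (Y : finType) (T : 'I_2 -> Y -> R) x0 x1 : stoch T -> Zfin T x0 x1 ->
  Zfin T (1 - x0) (1 - x1).
Proof.
move=> hT [s [hs [-> ->]]]; exists (fun y => 1 - s y); split.
  by move=> y; have := hs y => /andP [a b]; apply/andP; split; lra.
have [_ h0] := hT t0; have [_ h1] := hT t1.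
split; [rewrite -{1}h0 | rewrite -{1}h1]; rewrite -sumrB; apply: eq_bigr => y _; ring.
Qed.

Lemma hP_ge0 (Y : finType) (T : 'I_2 -> Y -> R) d0 d1 : 0 <= hF T d0 d1.
Proof. apply: sumr_ge0 => y _; exact: max0_ge0. Qed.

Lemma hP_ge (Y : finType) (T : 'I_2 -> Y -> R) d0 d1 : stoch T -> d0 + d1 <= hF T d0 d1.
Proof.
move=> hT; have [_ h0] := hT t0; have [_ h1] := hT t1.
have -> : d0 + d1 = d0 * (\sum_y T t0 y) + d1 * (\sum_y T t1 y) by rewrite h0 h1 !mulr1.
rewrite !mulr_sumr -big_split; apply: ler_sum => y _ /=.
exact: max0_ge.
Qed.

Lemma hP_le (Y : finType) (T : 'I_2 -> Y -> R) d0 d1 : stoch T -> 0 <= d0 -> d1 <= 0 ->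
  hF T d0 d1 <= d0.
Proof.
move=> hT hd0 hd1; have [p0 h0] := hT t0; have [p1 _] := hT t1.
apply: (@le_trans _ _ (d0 * \sum_y T t0 y)); last by rewrite h0 mulr1.
rewrite mulr_sumr; apply: ler_sum => y _.
have := p0 y; have := p1 y => a b.
rewrite maxE0; case: ifP => _; nra.
Qed.

Section SupBound.
Variables (Y1 Y2 Y3 : finType) (P : 'I_2 -> Y1 -> R) (Q : 'I_2 -> Y2 -> R)
  (Rr : 'I_2 -> Y3 -> R).
Hypotheses (hPe : stoch P) (hQe : stoch Q) (hRe : stoch Rr).
Variables (A' : finType) (a b : A').
Hypothesis ab : a != b.
Hypothesis Hsup : forall (Y : finType) (S : 'I_2 -> Y -> R), experiment S ->
    more_informative S P -> more_informative S Q -> more_informative S Rr.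

Lemma dom_exp (Y : finType) (T : 'I_2 -> Y -> R) c0 c1 m h g0 g1 v :
  stoch T -> 0 < c0 -> c1 < 0 -> 0 <= h -> 0 <= g0 -> 0 <= g1 -> 0 <= v ->
  h + g0 = 1 -> g1 + v = 1 -> c0 * g0 + c1 * g1 = 0 -> c0 * h = m ->
  hF T c0 c1 <= m -> forall d0 d1, hF T d0 d1 <= hF (S3 h g0 g1 v) d0 d1.
Proof.
move=> hT hc0 hc1 hh hg0 hg1 hv e1 e2 e3 e4 hm d0 d1.
have [x0 [x1 [hx ->]]] := hP_attained T d0 d1.
have [b0 b1] := Zfin_box hT hx.
have l1 := Zfin_le c0 c1 hx.
have l2 := Zfin_le c0 c1 (Zfin_compl hT hx).
rewrite hS3; apply: (@dom3 c0 c1 m h g0 g1 v x0 x1 d0 d1 hc0 hc1 hh hg0 hg1 hv e1 e2 e3 e4 b0 b1); lra.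
Qed.

Lemma sup_bound_pos c0 c1 : 0 < c0 -> c1 < 0 ->
  hF Rr c0 c1 <= Num.max (hF P c0 c1) (hF Q c0 c1).
Proof.
move=> hc0 hc1.
set m := Num.max (hF P c0 c1) (hF Q c0 c1).
have mP : hF P c0 c1 <= m by rewrite le_max lexx.
have mQ : hF Q c0 c1 <= m by rewrite le_max lexx orbT.
have m0 : 0 <= m by apply: le_trans mP; exact: hP_ge0.
have m1 : m <= c0 by rewrite ge_max !hP_le // ?ltW.
have m2 : c0 + c1 <= m by apply: le_trans mP; exact: hP_ge.
set h := m / c0; set g0 := 1 - h; set g1 := (c0 - m) / (- c1); set v := 1 - g1.
have c0n : c0 != 0 by rewrite gt_eqF.
have c1n : - c1 != 0 by rewrite oppr_eq0 lt_eqF.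
have e4 : c0 * h = m by rewrite /h mulrC divfK.
have e3 : c0 * g0 + c1 * g1 = 0.
  rewrite /g0 /g1 mulrBr mulr1 e4.
  have -> : c1 * ((c0 - m) / - c1) = - ((c0 - m) / - c1 * - c1) by ring.
  rewrite divfK //; ring.
have hh : 0 <= h by rewrite /h divr_ge0 // ltW.
have hh1 : h <= 1 by rewrite /h ler_pdivrMr // mul1r.
have hg1 : 0 <= g1 by rewrite /g1 divr_ge0; lra.
have hg11 : g1 <= 1 by rewrite /g1 ler_pdivrMr ?mul1r; lra.
have hg0 : 0 <= g0 by rewrite /g0; lra.
have hv : 0 <= v by rewrite /v; lra.
have e1 : h + g0 = 1 by rewrite /g0; ring.
have e2 : g1 + v = 1 by rewrite /v; ring.
have hS : stoch (S3 h g0 g1 v) by exact: S3_stoch.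
have SP := hard hPe hS (dom_exp hPe hc0 hc1 hh hg0 hg1 hv e1 e2 e3 e4 mP).
have SQ := hard hQe hS (dom_exp hQe hc0 hc1 hh hg0 hg1 hv e1 e2 e3 e4 mQ).
have SR := Hsup hS SP SQ.
apply: (le_trans (easy ab SR c0 c1)).
rewrite hS3 e3 e4.
have -> : Num.max 0 (c1 * v) = 0 by rewrite maxE0; case: ifP => // h'; nra.
by rewrite maxxx !addr0 maxE0 m0.
Qed.

Lemma hP_pos (Y : finType) (T : 'I_2 -> Y -> R) d0 d1 : stoch T -> 0 <= d0 -> 0 <= d1 ->
  hF T d0 d1 = d0 + d1.
Proof.
move=> hT h0 h1; have [p0 s0] := hT t0; have [p1 s1] := hT t1.
have -> : d0 + d1 = d0 * (\sum_y T t0 y) + d1 * (\sum_y T t1 y) by rewrite s0 s1 !mulr1.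
rewrite !mulr_sumr -big_split; apply: eq_bigr => y _ /=.
rewrite maxE0 ifT //; have := p0 y; have := p1 y; nra.
Qed.

Lemma hP_negc (Y : finType) (T : 'I_2 -> Y -> R) d0 d1 : stoch T -> d0 <= 0 -> d1 <= 0 ->
  hF T d0 d1 = 0.
Proof.
move=> hT h0 h1; have [p0 s0] := hT t0; have [p1 s1] := hT t1.
apply: big1 => y _; rewrite maxE0; case: ifP => // h; have := p0 y; have := p1 y; nra.
Qed.

Lemma hP_neg (Y : finType) (T : 'I_2 -> Y -> R) d0 d1 : stoch T ->
  hF T d0 d1 = hF T (- d0) (- d1) + (d0 + d1).
Proof.
move=> hT; have [p0 s0] := hT t0; have [p1 s1] := hT t1.
have -> : d0 + d1 = d0 * (\sum_y T t0 y) + d1 * (\sum_y T t1 y) by rewrite s0 s1 !mulr1.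
rewrite !mulr_sumr /hF -!big_split; apply: eq_bigr => y _ /=.
rewrite !maxE0; case: ifP => h1; case: ifP => h2; nra.
Qed.

Lemma sup_bound c0 c1 : hF Rr c0 c1 <= Num.max (hF P c0 c1) (hF Q c0 c1).
Proof.
case: (lerP 0 c0) => h0; case: (lerP 0 c1) => h1.
- by rewrite !hP_pos // le_max lexx.
- have [e|hc0] := eqVneq c0 0.
    by rewrite e !hP_negc // ?lexx ?(ltW h1) // maxxx.
  apply: sup_bound_pos => //; rewrite lt_neqAle eq_sym hc0 h0 //.
- rewrite (hP_neg _ _ hRe) (hP_neg _ _ hPe) (hP_neg _ _ hQe).
  have [e|hc1] := eqVneq c1 0.
    by rewrite e oppr0 !hP_pos // ?lexx ?oppr_ge0 ?(ltW h0) // maxxx.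
  have h : hF Rr (-c0) (-c1) <= Num.max (hF P (-c0) (-c1)) (hF Q (-c0) (-c1)).
    apply: sup_bound_pos; [by rewrite oppr_gt0 | by rewrite oppr_lt0 lt_neqAle eq_sym hc1].
  move: h; rewrite !le_max => /orP [] h; apply/orP; [left|right]; lra.
- by rewrite (hP_negc hRe (ltW h0) (ltW h1)) (hP_negc hPe (ltW h0) (ltW h1)) (hP_negc hQe (ltW h0) (ltW h1)) maxxx.
Qed.

End SupBound.

Lemma I2_cases (th : 'I_2) : th = t0 \/ th = t1.
Proof. by case: th => [[|[|n]]] p //; [left|right]; apply: val_inj. Qed.

Section Feas.
Variables (A : finType) (a b : A).
Hypotheses (ab : a != b) (hab : forall x, x = a \/ x = b).

Lemma ba : (b == a) = false. Proof. by rewrite eq_sym (negbTE ab). Qed.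

Lemma sumA (F : A -> R) : \sum_x F x = F a + F b.
Proof.
rewrite (bigD1 a) //= (bigD1 b) /= ?(eq_sym b) // big1 ?addr0 // => x /andP [xb xa].
by case: (hab x) => e; move: xa xb; rewrite e eqxx.
Qed.

Lemma feas_Z (Y : finType) (T : 'I_2 -> Y -> R) (lam : {ffun 'I_2 * A -> R}) : stoch T -> feasible A T lam ->
  Zfin T (lam (t0, a)) (lam (t1, a)) /\ forall th, lam (th, b) = 1 - lam (th, a).
Proof.
move=> hT [sg [hsg E]]; split.
  exists (fun y => sg y a); split; last by rewrite !E.
  move=> y; have [p s1] := hsg y; move: s1; rewrite sumA => s1.
  by rewrite p /=; have := p b; lra.
move=> th; have [_ s] := hT th; rewrite !E -{1}s -sumrB; apply: eq_bigr => y _.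
have [p s1] := hsg y; move: s1; rewrite sumA => s1.
have -> : sg y b = 1 - sg y a by lra.
ring.
Qed.

Lemma Z_feas (Y : finType) (T : 'I_2 -> Y -> R) (lam : {ffun 'I_2 * A -> R}) : stoch T ->
  Zfin T (lam (t0, a)) (lam (t1, a)) -> (forall th, lam (th, b) = 1 - lam (th, a)) ->
  feasible A T lam.
Proof.
move=> hT [s [hs [e0 e1]]] hb.
have ea : forall th, lam (th, a) = \sum_y s y * T th y.
  by move=> th; case: (I2_cases th) => ->.
exists (fun y x => if x == a then s y else 1 - s y); split.
  move=> y; split.
    by move=> x; case: ifP => _; have := hs y; case/andP => ? ?; lra.
  rewrite sumA eqxx ba; ring.
move=> th x; case: (hab x) => ->; rewrite ?eqxx ?ea //.
rewrite ba hb ea.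
have [_ st] := hT th; rewrite -{1}st -sumrB; apply: eq_bigr => y _; ring.
Qed.

Definition mkL (x0 x1 : R) : {ffun 'I_2 * A -> R} :=
  [ffun p => if p.2 == a then (if p.1 == t0 then x0 else x1)
             else 1 - (if p.1 == t0 then x0 else x1)].

Lemma mkL_feas (Y : finType) (T : 'I_2 -> Y -> R) x0 x1 : stoch T -> Zfin T x0 x1 ->
  feasible A T (mkL x0 x1).
Proof.
move=> hT hz; apply: Z_feas => //; first by rewrite !ffunE /= !eqxx.
by move=> th; rewrite !ffunE /= eqxx ba.
Qed.

Lemma feas_le (Y : finType) (T : 'I_2 -> Y -> R) (lam : {ffun 'I_2 * A -> R}) d0 d1 : stoch T -> feasible A T lam ->
  d0 * lam (t0, a) + d1 * lam (t1, a) <= hF T d0 d1.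
Proof. by move=> hT /(feas_Z hT) [hz _]; exact: Zfin_le. Qed.

End Feas.

End Basic.

End Aux.
Import Aux.

Theorem lemma2 (Rl : realType) (A : finType) (hA : #|A| = 2%N)
    (Y1 Y2 Y3 : finType)
    (P : Theta -> Y1 -> Rl) (Q : Theta -> Y2 -> Rl) (R : Theta -> Y3 -> Rl)
    (hP : experiment P) (hQ : experiment Q) (hR : experiment R) :
  blackwell_sup P Q R <->
  feasible A R = conv_hull (feasible A P `|` feasible A Q).
Proof.
have [a [b [ab hab]]] : exists a b : A, a != b /\ forall x, x = a \/ x = b.
  move: (hA); rewrite cardE; case E: (enum A) => [|a [|b [|c s]]] //= _.
  exists a, b; have := enum_uniq A; rewrite E /= inE => /andP [nab _]; split => // x.
  have : x \in enum A by rewrite mem_enum.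
  by rewrite E !inE => /orP [/eqP|/eqP]; auto.
have ba : (b == a) = false by rewrite eq_sym (negbTE ab).
split.
  move=> [RP [RQ Hsup]].
  have ePR := easy ab RP; have eQR := easy ab RQ.
  apply/seteqP; split => lam /=.
    move=> Hl; have [hz hb] := feas_Z ab hab hR Hl.
    have H : forall d0 d1, d0 * lam (t0, a) + d1 * lam (t1, a) <= Num.max (hF P d0 d1) (hF Q d0 d1).
      move=> d0 d1; apply: le_trans (Zfin_le d0 d1 hz) _.
      exact: (sup_bound hP hQ hR ab Hsup).
    have [t [x0 [x1 [w0 [w1 [ht [hx [hw [e0 e1]]]]]]]]] := co_farkas H.
    exists 2%N, (fun i => if i == t0 then t else 1 - t),
       (fun i => if i == t0 then mkL a x0 x1 else mkL a w0 w1).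
    split.
      move: ht => /andP [ht0 ht1] i; case: ifP => _; lra.
    split; first by rewrite sumI2 /= ?t10; ring.
    split.
      move=> i; case: ifP => _; [left; apply: (mkL_feas ab hab hP hx) | right; apply: (mkL_feas ab hab hQ hw)].
    move=> [th x]; rewrite sumI2 /= ?t10 !ffunE /=.
    case: (hab x) => ->; rewrite ?eqxx ?ba.
      by case: (I2_cases th) => ->; rewrite ?eqxx ?t10.
    by rewrite hb; case: (I2_cases th) => ->; rewrite ?eqxx ?t10 ?e0 ?e1; ring.
  move=> [n [w [x [hw [sw [hx E]]]]]].
  have bx : forall i th, x i (th, b) = 1 - x i (th, a).
    move=> i th; case: (hx i) => /(feas_Z ab hab) [] // _ -> //.
  have dx : forall i d0 d1, d0 * x i (t0, a) + d1 * x i (t1, a) <= hF R d0 d1.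
    move=> i d0 d1; case: (hx i) => h.
      apply: (le_trans _ (ePR d0 d1)); exact: (feas_le ab hab d0 d1 hP h).
    apply: (le_trans _ (eQR d0 d1)); exact: (feas_le ab hab d0 d1 hQ h).
  apply: (Z_feas ab hab hR).
    apply: Zfin_farkas => d0 d1; rewrite !E !mulr_sumr -big_split /=.
    apply: (@le_trans _ _ (\sum_i w i * hF R d0 d1)); last by rewrite -mulr_suml sw mul1r.
    apply: ler_sum => i _.
    have := ler_wpM2l (hw i) (dx i d0 d1); rewrite mulrDr; by rewrite !mulrA ![w i * _]mulrC.
  move=> th; rewrite !E -{1}sw -sumrB; apply: eq_bigr => i _; rewrite bx; ring.
move=> Eq.
have inR : forall lam, feasible A P lam \/ feasible A Q lam -> feasible A R lam.
  move=> lam h; rewrite Eq; exists 1%N, (fun _ => 1), (fun _ => lam).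
  split; first by move=> _; exact: ler01.
  split; first by rewrite big_ord1.
  split; first by move=> _.
  by move=> k; rewrite big_ord1 mul1r.
have TR : forall (Y : finType) (T : Theta -> Y -> Rl), stoch T ->
    (forall lam, feasible A T lam -> feasible A P lam \/ feasible A Q lam) ->
    forall d0 d1, hF T d0 d1 <= hF R d0 d1.
  move=> Y T hT hin d0 d1.
  have [x0 [x1 [hx ->]]] := hP_attained T d0 d1.
  have := feas_le ab hab d0 d1 hR (inR _ (hin _ (mkL_feas ab hab hT hx))).
  by rewrite !ffunE /= eqxx ?t10.
split; first by apply: (hard hP hR); apply: (TR _ P hP) => lam h; left.
split; first by apply: (hard hQ hR); apply: (TR _ Q hQ) => lam h; right.
move=> Y S hS SP SQ; apply: (hard hR hS) => d0 d1.
have eP := easy ab SP; have eQ := easy ab SQ.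
have [z0 [z1 [hz ->]]] := hP_attained R d0 d1.
have := mkL_feas ab hab hR hz; rewrite Eq => -[n [w [x [hw [sw [hx E]]]]]].
rewrite (_ : d0 * z0 + d1 * z1 = d0 * mkL a z0 z1 (t0, a) + d1 * mkL a z0 z1 (t1, a)); last first.
  by rewrite !ffunE /= !eqxx ?t10.
rewrite !E !mulr_sumr -big_split /=.
apply: (@le_trans _ _ (\sum_i w i * hF S d0 d1)); last by rewrite -mulr_suml sw mul1r.
apply: ler_sum => i _.
have dx : d0 * x i (t0, a) + d1 * x i (t1, a) <= hF S d0 d1.
  case: (hx i) => h.
    apply: (le_trans _ (eP d0 d1)); exact: (feas_le ab hab d0 d1 hP h).
  apply: (le_trans _ (eQ d0 d1)); exact: (feas_le ab hab d0 d1 hQ h).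
have := ler_wpM2l (hw i) dx; rewrite mulrDr; by rewrite !mulrA ![w i * _]mulrC.
Qed.
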